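(* Let $\Phi$ be a CNF formula in which every clause consists of exactly two (possibly equal) literals, and let $k$ be an integer. For each variable $x$ let $n(x)$ be the number of occurrences of $x$ in $\Phi$ (a clause $(l\vee l)$ with $l\in\{x,\neg x\}$ counts as two), numbered $1,\dots,n(x)$ arbitrarily. Build a graph $G$ with vertices $v(x,i)$ and $v(\neg x,i)$ for every variable $x$ and $1\le i\le n(x)$; for each $x$, join every vertex of $V(x)=\{v(x,i)\}_i$ to every vertex of $V(\neg x)=\{v(\neg x,j)\}_j$; and for each clause $C=(l_x\vee l_y)$, where $l_x$ is the $i$-th occurrence of variable $x$ and $l_y$ the $j$-th occurrence of variable $y$ (with $(x,i)\neq(y,j)$), add the edge $v(l_x,i)v(l_y,j)$. Then $G$ has a perfect matching, and there is a set of at most $k$ clauses of $\Phi$ whose deletion makes $\Phi$ satisfiable iff $G$ has a vertex cover of size at most $\mu(G)+k$.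
   Context: $\mu(G)$ denotes the size of a maximum matching of $G$. Here $v(l,i)$ for a literal $l\in\{x,\neg x\}$ denotes the vertex $v(x,i)$ or $v(\neg x,i)$ respectively. *)

(* Defs.v *)
From HB Require Import structures.
From mathcomp Require Import all_boot.
Set Implicit Arguments. Unset Strict Implicit. Unset Printing Implicit Defensive.

Section Graph.
Variable V : finType.
Variable adj : rel V.

Definition is_matching (M : {set {set V}}) : bool :=
  [forall e in M, exists u, exists v, [&& adj u v, u != v & e == [set u; v]]] &&
  [forall e1 in M, forall e2 in M, (e1 != e2) ==> [disjoint e1 & e2]].

Definition matching_number : nat :=
  \max_(M : {set {set V}} | is_matching M) #|M|.

Definition is_perfect_matching (M : {set {set V}}) : bool :=
  is_matching M && (cover M == [set: V]).

Definition is_vertex_cover (C : {set V}) : bool :=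
  [forall u, forall v, adj u v ==> (u \in C) || (v \in C)].
End Graph.

(* A literal over variables 'I_nv: (x, true) is x, (x, false) is ~x. *)
Definition lit (nv : nat) := ('I_nv * bool)%type.

(* An occurrence of a variable: (clause index, position) where position
   false = first literal, true = second literal. *)
Definition occ (m : nat) := ('I_m * bool)%type.

Definition occ_lit nv m (Phi : 'I_m -> lit nv * lit nv) (o : occ m) : lit nv :=
  if o.2 then (Phi o.1).2 else (Phi o.1).1.

(* Vertices of G: v(l, i) with l in {x, ~x} and i the i-th occurrence of x is
   encoded as (o, s) where o is that occurrence (of variable x) and s the
   polarity of l (true: v(x,i), false: v(~x,i)). *)
Definition red_vertex (m : nat) := (occ m * bool)%type.

Definition red_adj nv m (Phi : 'I_m -> lit nv * lit nv) : rel (red_vertex m) :=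
  fun u w =>
    (* V(x) completely joined to V(~x) *)
    (((occ_lit Phi u.1).1 == (occ_lit Phi w.1).1) && (u.2 != w.2))
    ||
    (* clause edges v(l_x, i) v(l_y, j) for the two occurrences of a clause *)
    [&& u.1.1 == w.1.1, u.1.2 != w.1.2,
        u.2 == (occ_lit Phi u.1).2 & w.2 == (occ_lit Phi w.1).2].

Definition lit_true nv (a : 'I_nv -> bool) (l : lit nv) : bool := a l.1 == l.2.

Definition sat_without nv m (Phi : 'I_m -> lit nv * lit nv) (D : {set 'I_m}) : Prop :=
  exists a : 'I_nv -> bool,
    forall c : 'I_m, c \notin D -> lit_true a (Phi c).1 || lit_true a (Phi c).2.

(* Main.v *)
Require Import Defs.
From HB Require Import structures.
From mathcomp Require Import all_boot zify.
Set Implicit Arguments. Unset Strict Implicit. Unset Printing Implicit Defensive.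

Lemma card_occ m : #|{: occ m}| = m * 2.
Proof. by rewrite card_prod card_ord card_bool. Qed.

Lemma card_rv m : #|{: red_vertex m}| = m * 2 * 2.
Proof. by rewrite card_prod card_occ card_bool. Qed.

Lemma mu_le nv m (Phi : 'I_m -> lit nv * lit nv) :
  matching_number (red_adj Phi) <= m * 2.
Proof.
apply/bigmax_leqP => M /andP[/forallP H1 /forallP H2].
have triv : trivIset M.
  apply/trivIsetP => e1 e2 h1 h2 ne.
  by have := H2 e1; rewrite h1 /= => /forallP/(_ e2); rewrite h2 ne.
have cs : \sum_(e in M) #|e| = #|M| * 2.
  rewrite -sum_nat_const; apply: eq_bigr => e he.
  have := H1 e; rewrite he /= => /existsP[u /existsP[v /and3P[_ uv /eqP ->]]].
  by rewrite cards2 uv.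
have := max_card (cover M); rewrite card_rv -(eqP triv) cs; lia.
Qed.

Definition M0 m : {set {set red_vertex m}} := [set [set (o,true); (o,false)] | o : occ m].

Lemma M0_perfect nv m (Phi : 'I_m -> lit nv * lit nv) :
  is_perfect_matching (red_adj Phi) (M0 m).
Proof.
apply/andP; split; [apply/andP; split|].
- apply/forallP => e; apply/implyP => /imsetP[o _ ->].
  apply/existsP; exists (o,true); apply/existsP; exists (o,false).
  apply/and3P; split => //; first by rewrite /red_adj /= eqxx.
  by rewrite xpair_eqE eqxx.
- apply/forallP => e1; apply/implyP => /imsetP[o1 _ ->].
  apply/forallP => e2; apply/implyP => /imsetP[o2 _ ->].
  apply/implyP => ne; apply/pred0P => v; apply/negbTE/negP.
  rewrite /= !inE => /andP[].
  move=> /orP[] /eqP -> /orP[] /eqP [] E; by rewrite E eqxx in ne.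
- apply/eqP/setP => v; rewrite inE; apply/bigcupP.
  exists [set (v.1,true); (v.1,false)]; first by apply/imsetP; exists v.1.
  by case: v => o [] ; rewrite !inE eqxx ?orbT.
Qed.

Lemma card_M0 m : #|M0 m| = m * 2.
Proof.
rewrite card_imset ?card_occ // => o1 o2 E.
have : (o1,true) \in [set (o2,true); (o2,false)] by rewrite -E !inE eqxx.
by rewrite !inE => /orP[] /eqP [].
Qed.

Lemma mu_eq nv m (Phi : 'I_m -> lit nv * lit nv) :
  matching_number (red_adj Phi) = m * 2.
Proof.
apply/eqP; rewrite eqn_leq mu_le /= -(card_M0 m).
apply: (@leq_bigmax_cond _ (fun M => is_matching (red_adj Phi) M) (fun M => #|M|)).
by have /andP[] := @M0_perfect nv m Phi.
Qed.
Definition Gset nv m (Phi : 'I_m -> lit nv * lit nv) (a : 'I_nv -> bool) : {set red_vertex m} :=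
  [set (o, a (occ_lit Phi o).1) | o : occ m].

Lemma memG nv m (Phi : 'I_m -> lit nv * lit nv) a v :
  (v \in Gset Phi a) = (v.2 == a (occ_lit Phi v.1).1).
Proof.
apply/imsetP/eqP => [[o _ ->] // | E]; exists v.1 => //.
by case: v E => o s /= ->.
Qed.

Lemma cardG nv m (Phi : 'I_m -> lit nv * lit nv) a : #|Gset Phi a| = m * 2.
Proof. by rewrite card_imset ?card_occ // => o1 o2 [->]. Qed.

Lemma fwd nv m (Phi : 'I_m -> lit nv * lit nv) (D : {set 'I_m}) a :
  (forall c : 'I_m, c \notin D -> lit_true a (Phi c).1 || lit_true a (Phi c).2) ->
  is_vertex_cover (red_adj Phi)
    (Gset Phi a :|: [set ((c,false),(Phi c).1.2) | c in D]).
Proof.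
move=> Hs; apply/forallP => u; apply/forallP => w; apply/implyP.
case: u => [[cu pu] su]; case: w => [[cw pw] sw].
rewrite /red_adj /= => /orP[/andP[Hv Hsd] | /and4P[/eqP Ec Hp /eqP Hsu /eqP Hsw]].
  rewrite !in_setU !memG /= (eqP Hv).
  by move: Hsd; case: su; case: sw; case: (a _); rewrite /= ?orbT.
subst cw.
set C := _ :|: _.
have key : (((cu,false),(Phi cu).1.2) \in C) || (((cu,true),(Phi cu).2.2) \in C).
  rewrite !in_setU !memG /occ_lit /=; case: (boolP (cu \in D)) => hD.
    by apply/orP; left; apply/orP; right; apply/imsetP; exists cu.
  move: (Hs cu hD); rewrite /lit_true => /orP[h|h]; [apply/orP; left|apply/orP; right];
    apply/orP; left; by rewrite eq_sym.
move: Hp Hsu Hsw; rewrite /occ_lit /=; case: pu; case: pw => //= _ -> ->.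
  by rewrite orbC.
by [].
Qed.

Lemma bwd nv m (Phi : 'I_m -> lit nv * lit nv) (C : {set red_vertex m}) :
  is_vertex_cover (red_adj Phi) C ->
  exists D : {set 'I_m}, #|D| + m * 2 <= #|C| /\ sat_without Phi D.
Proof.
move=> /forallP HC.
have adjE u w : red_adj Phi u w -> (u \in C) || (w \in C).
  by move=> h; move/forallP: (HC u) => /(_ w); rewrite h.
pose a := fun x : 'I_nv => [forall o : occ m, ((occ_lit Phi o).1 == x) ==> ((o,true) \in C)].
have inC o : (o, a (occ_lit Phi o).1) \in C.
  case E: (a _).
    by move/forallP: E => /(_ o); rewrite eqxx.
  move/negbT/forallPn: E => [o0]; rewrite negb_imply => /andP[/eqP e0 n0].
  have := adjE (o0,true) (o,false); rewrite /red_adj /= e0 eqxx /= => /(_ isT).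
  by rewrite (negbTE n0).
have GC : Gset Phi a \subset C.
  by apply/subsetP => v; rewrite memG => /eqP; case: v => o s /= ->.
pose D := [set c | ~~ (lit_true a (Phi c).1 || lit_true a (Phi c).2)].
exists D; split; last by exists a => c; rewrite inE negbK.
pose f := fun c : 'I_m => if ((c,false),(Phi c).1.2) \in C then ((c,false),(Phi c).1.2)
   else ((c,true),(Phi c).2.2).
have finj : injective f.
  by apply: (can_inj (g := fun v : red_vertex m => v.1.1)) => c; rewrite /f; case: ifP.
have sub : f @: D \subset C :\: Gset Phi a.
  apply/subsetP => v /imsetP[c]; rewrite inE negb_or /lit_true => /andP[h1 h2] ->.
  have := adjE ((c,false),(Phi c).1.2) ((c,true),(Phi c).2.2).
  rewrite /red_adj /occ_lit /= !eqxx orbT => /(_ isT).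
  rewrite /f; case: ifP => h; rewrite in_setD memG /occ_lit /= ?h.
    by rewrite eq_sym h1.
  by move=> /= h'; rewrite h' eq_sym h2.
rewrite -(cardsID (Gset Phi a) C) (setIidPr GC) cardG -(card_imset D finj) addnC leq_add2l.
exact: subset_leq_card.
Qed.

Theorem mainTheorem10 (nv m : nat) (Phi : 'I_m -> lit nv * lit nv) (k : nat) :
  (exists M : {set {set red_vertex m}}, is_perfect_matching (red_adj Phi) M) /\
  ((exists D : {set 'I_m}, #|D| <= k /\ sat_without Phi D) <->
   (exists C : {set red_vertex m},
      is_vertex_cover (red_adj Phi) C /\
      #|C| <= matching_number (red_adj Phi) + k)).
Proof.
split; first by exists (M0 m); apply: M0_perfect.
rewrite mu_eq; split.
  move=> [D [hD [a ha]]].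
  exists (Gset Phi a :|: [set ((c,false),(Phi c).1.2) | c in D]); split.
    exact: fwd.
  rewrite cardsU; apply: leq_trans (leq_subr _ _) _; rewrite cardG leq_add2l.
  exact: leq_trans (leq_imset_card _ _) hD.
move=> [C [hC hk]]; have [D [hD hs]] := bwd hC.
exists D; split => //; lia.
Qed.
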